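(* Let $G$ be a finite simple graph and let $\alpha=\alpha(G)$ be its independence number. Then the coefficient of $t^{\alpha}$ in the $h$-polynomial $h_G(t)$ of $S/I(G)$ satisfies \[ h_{\alpha}(G)=(-1)^{\alpha}P_G(-1), \] where $P_G(x)$ is the independence polynomial of $G$.
   Context: Let $G$ be a finite simple graph on vertex set $[N]$, $K$ a field, $S=K[x_1,\dots,x_N]$, and $I(G)\subset S$ the edge ideal generated by the monomials $x_ix_j$ with $\{i,j\}\in E(G)$. The independence number $\alpha(G)$ is the maximum size of an independent set of $G$; it equals $\dim S/I(G)$. The Hilbert series of $S/I(G)$ is written uniquely as $h_G(t)/(1-t)^{\alpha(G)}$ with $h_G(t)=h_0+h_1t+\dots+h_st^s\in\mathbb Z[t]$, $h_s\neq 0$; $h_G(t)$ is the $h$-polynomial. Write $h_G(t)=\sum_{i=0}^{\alpha(G)}h_i(G)t^i$ with $h_i(G)=0$ for $i>\deg h_G(t)$. The independence polynomial is $P_G(x)=\sum_{i\ge 0} g_ix^i$, where $g_i$ is the number of independent sets of $G$ of size $i$ (with $g_0=1$). *)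

(* Defs.v *)
From mathcomp Require Import all_boot all_order all_algebra.
Set Implicit Arguments. Unset Strict Implicit. Unset Printing Implicit Defensive.
Import GRing.Theory Num.Theory.
Local Open Scope ring_scope.

Definition simple_graph (N : nat) (e : rel 'I_N) : Prop :=
  irreflexive e /\ symmetric e.

Definition independent (N : nat) (e : rel 'I_N) (A : {set 'I_N}) : bool :=
  [forall i in A, forall j in A, ~~ e i j].

Definition indep_number (N : nat) (e : rel 'I_N) : nat :=
  (\max_(A : {set 'I_N} | independent e A) #|A|)%N.

Definition indep_poly (N : nat) (e : rel 'I_N) : {poly int} :=
  \poly_(i < N.+1) (#|[set A : {set 'I_N} | independent e A & #|A| == i]| : nat)%:Z.

(* Monomials of S = K[x_1..x_N] of degree d are exponent vectors m with
   sum m = d (each exponent is < d+1).  Such a monomial lies in the monomial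
   ideal I(G) iff it is divisible by some generator x_i x_j, {i,j} an edge,
   i.e. m i >= 1 and m j >= 1. *)
Definition in_edge_ideal (N d : nat) (e : rel 'I_N) (m : {ffun 'I_N -> 'I_d.+1}) : bool :=
  [exists i, exists j, [&& e i j, (0 < m i)%N & (0 < m j)%N]].

(* Hilbert function of S/I(G): dim_K (S/I(G))_d = number of degree-d
   monomials not in I(G) (I(G) is a monomial ideal, so the standard monomials
   form a K-basis of S/I(G), for any field K). *)
Definition hilbert_fun (N : nat) (e : rel 'I_N) (d : nat) : nat :=
  #|[set m : {ffun 'I_N -> 'I_d.+1} |
      ((\sum_i (m i : nat))%N == d) && ~~ in_edge_ideal e m]|.

(* h is the h-polynomial: Hilb(S/I(G), t) = h(t) / (1-t)^a with a = alpha(G),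
   i.e. coefficientwise, since 1/(1-t)^a = sum_n C(n+a-1, n) t^n,
     H(d) = sum_{i <= d} h_i * C(d-i+a-1, d-i)   for every d.
   (For a = 0 the truncated subtraction gives C(0,0)=1 at n=0 and
    C(n-1,n)=0 for n>0, as required.) *)
Definition is_h_poly (N : nat) (e : rel 'I_N) (h : {poly int}) : Prop :=
  forall d : nat,
    (hilbert_fun e d)%:Z =
    \sum_(i < d.+1) h`_i * ('C(d - i + indep_number e - 1, d - i))%N%:Z.

(* Main.v *)
Require Import Defs.
From mathcomp Require Import all_boot all_order all_algebra.
From mathcomp Require Import zify ring.
Import GRing.Theory Num.Theory.
Local Open Scope ring_scope.

Definition eqm (n : nat) (p q : {poly int}) := forall i, (i < n)%N -> p`_i = q`_i.

Lemma eqm_refl n p : eqm n p p. Proof. by []. Qed.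
Lemma eqm_sym n p q : eqm n p q -> eqm n q p. Proof. by move=> H i /H ->. Qed.
Lemma eqm_trans n p q r : eqm n p q -> eqm n q r -> eqm n p r.
Proof. by move=> H1 H2 i Hi; rewrite H1 // H2. Qed.

Lemma eqmM n p q r s : eqm n p q -> eqm n r s -> eqm n (p * r) (q * s).
Proof.
move=> H1 H2 i Hi; rewrite !coefM; apply: eq_bigr => j _.
have Hj : (j < n)%N by apply: leq_ltn_trans Hi; rewrite -ltnS.
have Hij : (i - j < n)%N by apply: leq_ltn_trans Hi; rewrite leq_subr.
by rewrite H1 // H2.
Qed.

Lemma eqmX n p q k : eqm n p q -> eqm n (p ^+ k) (q ^+ k).
Proof.
move=> H; elim: k => [|k IH]; first exact: eqm_refl.
by rewrite !exprS; apply: eqmM.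
Qed.

Definition Pc (a D : nat) : {poly int} := \poly_(n < D) ('C(n + a - 1, n))%:Z.

Lemma coef_1subX (p : {poly int}) i :
  ((1 - 'X) * p)`_i = p`_i - (if i == 0%N then 0 else p`_i.-1).
Proof. by rewrite mulrBl mul1r coefB coefXM. Qed.

Lemma Pc_step a D : eqm D ((1 - 'X) * Pc a.+1 D) (Pc a D).
Proof.
move=> i Hi; rewrite coef_1subX !coef_poly Hi.
case: i Hi => [|k] Hi /=; first by rewrite !bin0 subr0.
rewrite (ltnW Hi).
have -> : (k.+1 + a.+1 - 1 = (k + a).+1)%N by lia.
have -> : (k + a.+1 - 1 = k + a)%N by lia.
have -> : (k.+1 + a - 1 = k + a)%N by lia.
by rewrite binS PoszD addrK.
Qed.

Lemma Pc_inv a D : eqm D ((1 - 'X) ^+ a * Pc a D) 1.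
Proof.
elim: a => [|a IH].
  move=> i Hi; rewrite expr0 mul1r coef_poly Hi coef1.
  by case: i Hi => [|i] Hi //=; rewrite addn0 subn1 /= bin_small.
apply: eqm_trans IH; rewrite exprSr -mulrA; apply: eqmM => //; exact: Pc_step.
Qed.

Lemma coef_1subX_hi m j : (m < j)%N -> ((1 - 'X) ^+ m : {poly int})`_j = 0.
Proof.
elim: m j => [|m IH] j Hj; first by rewrite expr0 coef1; case: j Hj.
rewrite exprS coef_1subX; case: j Hj => [|j] Hj //=.
by rewrite !IH // ltnW.
Qed.

Lemma coef_1subX_top m : ((1 - 'X) ^+ m : {poly int})`_m = (-1) ^+ m.
Proof.
elim: m => [|m IH]; first by rewrite expr0 coef1.
by rewrite exprS coef_1subX /= IH coef_1subX_hi // sub0r exprS mulN1r.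
Qed.

Definition T (n : nat) : {poly int} := \poly_(j < n.+1) ((0 < j)%N)%:R.

Definition supp {N n} (m : {ffun 'I_N -> 'I_n}) : {set 'I_N} := [set i | (0 < m i)%N].

Lemma ideal_supp N n (e : rel 'I_N) (m : {ffun 'I_N -> 'I_n.+1}) :
  ~~ in_edge_ideal e m = independent e (supp m).
Proof.
apply/idP/idP.
  move=> H; apply/forallP => i; apply/implyP => Hi; apply/forallP => j; apply/implyP => Hj.
  apply/negP => Eij; move/negP: H; apply; apply/existsP; exists i; apply/existsP; exists j.
  by rewrite Eij; rewrite !inE in Hi Hj; rewrite Hi Hj.
move=> H; apply/negP => /existsP [i /existsP [j /and3P [Eij Hi Hj]]].
have Hi' : i \in supp m by rewrite inE.
have Hj' : j \in supp m by rewrite inE.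
by move: H => /forallP /(_ i) /implyP /(_ Hi') /forallP /(_ j) /implyP /(_ Hj') /negP.
Qed.

Lemma sum_row N n (A : {set 'I_N}) (i : 'I_N) :
  \sum_(j : 'I_n.+1) (if (i \in A) == (0 < j)%N then 'X^j else 0 : {poly int})
  = if i \in A then T n else 1.
Proof.
case: (i \in A).
  rewrite /T poly_def; apply: eq_bigr => j _.
  by case: (0 < j)%N; rewrite ?scale1r ?scale0r.
rewrite big_ord_recl /= expr0 big1 ?addr0 // => j _.

Qed.

Lemma inner_sum N n (A : {set 'I_N}) :
  \sum_(m : {ffun 'I_N -> 'I_n.+1} | supp m == A) 'X^(\sum_i (m i : nat))
  = (T n) ^+ #|A|.
Proof.
rewrite -prodr_const [RHS]big_mkcond /=; symmetry.
under eq_bigr => i _ do rewrite -(sum_row N n A i).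
rewrite bigA_distr_bigA /= [RHS]big_mkcond /=; apply: eq_bigr => m _.
have -> : (supp m == A) = [forall i, (i \in A) == (0 < m i)%N].
  apply/eqP/forallP.
    by move=> <- i; rewrite inE.
  by move=> H; apply/setP => i; rewrite inE; move/eqP: (H i).
case: forallP => H.
  rewrite -prodrXr; apply: eq_bigr => i _; by rewrite H.
have [i Hi] : exists i, ~~ ((i \in A) == (0 < m i)%N).
  apply/existsP; rewrite -negb_forall; apply/negP => /forallP; exact: H.
by rewrite (bigD1 i) //= (negbTE Hi) mul0r.
Qed.

Lemma hilb_poly N (e : rel 'I_N) d :
  (hilbert_fun e d)%:Z = (\sum_(A | independent e A) (T d) ^+ #|A|)`_d.
Proof.
have -> : \sum_(A | independent e A) (T d) ^+ #|A| =
    \sum_(m : {ffun 'I_N -> 'I_d.+1} | ~~ in_edge_ideal e m) 'X^(\sum_i (m i : nat)).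
  rewrite [RHS](eq_bigl (fun m : {ffun 'I_N -> 'I_d.+1} => independent e (supp m))); last first.
    by move=> m; rewrite /= ideal_supp.
  rewrite [RHS](partition_big (@supp N d.+1) (independent e)) //.
  apply: eq_bigr => A HA; rewrite -inner_sum; apply: eq_bigl => m.
  by case: (supp m =P A) => [->|_]; rewrite ?HA ?eqxx ?andbF.
rewrite (coef_sum) /hilbert_fun -sum1_card -natz natr_sum.
rewrite big_mkcond [RHS]big_mkcond /=; apply: eq_bigr => m _.
rewrite inE coefXn eq_sym andbC.
by case: (~~ _); case: (_ == _).
Qed.

Lemma eqm_T d a : (d <= a)%N -> eqm d.+1 (T d) (T a).
Proof.
move=> Hda i Hi; rewrite /T !coef_poly Hi.
by have -> : (i < a.+1)%N by apply: leq_trans Hi _.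
Qed.

Lemma eqm_1subXT a : eqm a.+1 ((1 - 'X) * T a) 'X.
Proof.
move=> i Hi; rewrite coef_1subX coefX /T !coef_poly Hi.
case: i Hi => [|[|i]] Hi //=.
by rewrite (ltnW Hi) subrr.
Qed.

Lemma coef_term a k : (k <= a)%N ->
  ((1 - 'X) ^+ a * (T a) ^+ k)`_a = (-1) ^+ (a - k).
Proof.
move=> Hka.
have -> : (1 - 'X) ^+ a * (T a) ^+ k = (1 - 'X) ^+ (a - k) * ((1 - 'X) * T a) ^+ k.
  by rewrite exprMn mulrA -exprD subnK.
rewrite (@eqmM a.+1 _ _ _ _ (eqm_refl a.+1 ((1 - 'X) ^+ (a - k))) (@eqmX _ _ _ k (eqm_1subXT a)) a (ltnSn a)).
by rewrite coefMXn ltnNge Hka /= coef_1subX_top.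
Qed.

Lemma sign_split (a k : nat) : (k <= a)%N ->
  ((-1) ^+ (a - k) : int) = (-1) ^+ a * (-1) ^+ k.
Proof.
move=> Hka; rewrite -{2}(subnK Hka) exprD -mulrA -exprMn mulrNN mulr1 expr1n.
by rewrite mulr1.
Qed.

Lemma indep_poly_eval N (e : rel 'I_N) :
  (indep_poly e).[-1] = \sum_(A | independent e A) (-1) ^+ #|A|.
Proof.
rewrite /indep_poly horner_poly.
rewrite (partition_big (fun A : {set 'I_N} => (inord #|A| : 'I_N.+1)) xpredT) //.
apply: eq_bigr => i _.
rewrite -natz mulr_natl -sumr_const.
apply: eq_big => A.
  rewrite inE; case: (independent e A) => //=.
  have HA : (#|A| < N.+1)%N by rewrite ltnS -[X in (_ <= X)%N](card_ord N) max_card.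
  by rewrite -[RHS](inj_eq val_inj) /= inordK.
by rewrite inE => /andP [_ /eqP ->].
Qed.

Theorem proposition1p1 (N : nat) (e : rel 'I_N) (h : {poly int}) :
  simple_graph e -> is_h_poly e h ->
  h`_(indep_number e) = (-1) ^+ (indep_number e) * (indep_poly e).[-1].
Proof.
move=> _ Hh.
set a := indep_number e.
have Hb : forall A, independent e A -> (#|A| <= a)%N.
  by move=> A HA; apply: (@leq_bigmax_cond _ (independent e) (fun A => #|A|) A).
set Hp := \sum_(A | independent e A) (T a) ^+ #|A|.
have E1 : eqm a.+1 Hp (h * Pc a a.+1).
  move=> d Hd; rewrite coefM.
  have -> : Hp`_d = (\sum_(A | independent e A) (T d) ^+ #|A|)`_d.
    rewrite !coef_sum; apply: eq_bigr => A _.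
    by rewrite -(@eqmX _ _ _ #|A| (eqm_T d a (ltnSE Hd)) d (ltnSn d)).
  rewrite -hilb_poly Hh; apply: eq_bigr => j _.
  rewrite /Pc coef_poly.
  have -> : (d - j < a.+1)%N by apply: leq_ltn_trans Hd; rewrite leq_subr.
  by [].
have E2 : h`_a = ((1 - 'X) ^+ a * Hp)`_a.
  have -> : h`_a = (h * ((1 - 'X) ^+ a * Pc a a.+1))`_a.
    by rewrite (@eqmM a.+1 _ _ _ _ (eqm_refl a.+1 h) (Pc_inv a a.+1) a (ltnSn a)) mulr1.
  rewrite mulrCA.
  exact: (@eqmM a.+1 _ _ _ _ (eqm_refl a.+1 ((1 - 'X) ^+ a)) (@eqm_sym _ _ _ E1) a (ltnSn a)).
rewrite E2 /Hp mulr_sumr coef_sum indep_poly_eval mulr_sumr.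
apply: eq_bigr => A HA.
by rewrite coef_term ?Hb // sign_split ?Hb.
Qed.
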